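(* Let $X$ be a real Banach space. Then the set $\mathcal{F}(X)$ of Flinn elements of $X$ is norm-closed in $X$.
   Context: A bounded linear operator $T:X\to X$ on a real Banach space is numerically positive if for every $x\in X$ and every $x^*\in X^*$ with $\|x^*\|^2=\|x\|^2=x^*(x)$ one has $x^*(Tx)\ge 0$. An element $u\in X$ is a Flinn element if there is a numerically positive linear projection of $X$ onto $\operatorname{span}\{u\}$; for $u\neq 0$ this means there exists $f\in X^*$ with $f(u)=1$ such that the map $f\otimes u: x\mapsto f(x)u$ is numerically positive. The element $0$ is a Flinn element. $\mathcal{F}(X)$ denotes the set of all Flinn elements of $X$. *)

(* Defs.v *)
From HB Require Import structures.
From mathcomp Require Import all_boot all_order all_algebra.
From mathcomp Require Import all_classical all_reals all_analysis.
Set Implicit Arguments. Unset Strict Implicit. Unset Printing Implicit Defensive.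
Import Order.TTheory GRing.Theory Num.Theory.
Import numFieldNormedType.Exports.
Local Open Scope classical_set_scope.
Local Open Scope ring_scope.

Section Flinn.
Context {R : realType} {X : completeNormedModType R}.

Definition is_linear {Y : lmodType R} (f : X -> Y) : Prop :=
  forall (a : R) (x y : X), f (a *: x + y) = a *: f x + f y.

Definition in_dual (f : X -> R) : Prop := is_linear f /\ continuous f.

Definition dual_norm (f : X -> R) : R :=
  sup [set `|f x| | x in [set x : X | `|x| <= 1]].

(* numerically positive operator (T assumed bounded linear where used) *)
Definition numerically_positive (T : X -> X) : Prop :=
  forall (x : X) (xs : X -> R), in_dual xs ->
    dual_norm xs ^+ 2 = `|x| ^+ 2 -> xs x = `|x| ^+ 2 -> 0 <= xs (T x).

Definition flinn (u : X) : Prop :=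
  exists P : X -> X,
    [/\ is_linear P, continuous P, (forall x, P (P x) = P x),
        range P = [set c *: u | c in [set: R]] & numerically_positive P].

Definition flinn_set : set X := [set u | flinn u].

End Flinn.

(* Main.v *)
Require Import Defs.
From HB Require Import structures.
From mathcomp Require Import all_boot all_order all_algebra.
From mathcomp Require Import all_classical all_reals all_analysis.
From mathcomp Require Import lra.
Set Implicit Arguments. Unset Strict Implicit. Unset Printing Implicit Defensive.
Import Order.TTheory GRing.Theory Num.Theory.
Import numFieldNormedType.Exports.
Local Open Scope classical_set_scope.
Local Open Scope ring_scope.


Section HBsec.
Context {R : realType} {X : normedModType R}.

Definition linc (G : set (X * R)) :=
  forall (a : R) p q, G p -> G q -> G (a *: p.1 + q.1, a * p.2 + q.2).
Definition domd (G : set (X * R)) := forall p, G p -> p.2 <= `|p.1|.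
Definition QQ G := linc G /\ domd G.

Lemma QQ_fun G x r s : QQ G -> G (x, r) -> G (x, s) -> r = s.
Proof.
move=> [lG dG] Gr Gs.
have h1 := dG _ (lG (-1) _ _ Gr Gs); have h2 := dG _ (lG (-1) _ _ Gs Gr).
move: h1 h2 => /=; rewrite scaleN1r addNr normr0 => h1 h2.
apply/eqP; rewrite eq_le; apply/andP; split; rewrite -subr_le0; [|move: h1]; lra.
Qed.


Variable y : X.
Definition G0 : set (X * R) := [set p | exists t : R, p = (t *: y, t * `|y|)].

Lemma QQ_G0 : QQ G0.
Proof.
split.
  move=> a p q [t ->] [s ->] /=; exists (a * t + s).
  by rewrite scalerDl scalerA mulrDl mulrA.
move=> p [t ->] /=; rewrite normrZ; apply: ler_wpM2r => //; exact: ler_norm.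
Qed.

Lemma QQ_scale G : QQ G -> G0 `<=` G -> forall a p, G p -> G (a *: p.1, a * p.2).
Proof.
move=> [lG _] sG a p Gp.
have G00 : G (0 *: y, 0 * `|y|) by apply: sG; exists 0.
have := lG a _ _ Gp G00; by rewrite /= scale0r mul0r addr0 addr0.
Qed.

Lemma QQ_add G : QQ G -> forall p q, G p -> G q -> G (p.1 + q.1, p.2 + q.2).
Proof. by move=> [lG _] p q Gp Gq; have := lG 1 _ _ Gp Gq; rewrite scale1r mul1r. Qed.


Lemma ext_bound G z : QQ G -> G0 `<=` G ->
  let a := sup [set p.2 - `|p.1 - z| | p in G] in
  forall p t, G p -> p.2 + t * a <= `|p.1 + t *: z|.
Proof.
move=> QG sG a p t Gp.
have hs : has_sup [set p.2 - `|p.1 - z| | p in G].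
  split; first by exists ((0 * `|y|) - `|0 *: y - z|); exists (0 *: y, 0 * `|y|) => //; apply: sG; exists 0.
  exists `|z| => _ [q Gq <-].
  have h1 := QG.2 _ Gq.
  have h2 : `|q.1| <= `|q.1 - z| + `|z|.
    by rewrite -[X in `|X| <= _](subrK z); exact: ler_normD.
  lra.
have [t0|t0|->] := ltgtP t 0; last first.
- by rewrite mul0r scale0r !addr0; exact: QG.2.
-
  set x' := t^-1 *: p.1; set r' := t^-1 * p.2.
  have Gx' : G (x', r') by exact: (QQ_scale QG sG _ Gp).
  have ha : a <= `|x' + z| - r'.
    apply: ge_sup; first by case: hs.
    move=> _ [q Gq <-].
    have h1 := QG.2 _ (QQ_add QG Gq Gx'); rewrite /= in h1.
    have h2 : `|q.1 + x'| <= `|q.1 - z| + `|x' + z|.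
      have -> : q.1 + x' = (q.1 - z) + (x' + z) by rewrite [x' + z]addrC addrA subrK.
      exact: ler_normD.
    lra.
  have e1 : `|p.1 + t *: z| = t * `|x' + z|.
    rewrite -[t in RHS]gtr0_norm // -normrZ scalerDr /x' scalerA mulfV ?scale1r //.
    by rewrite gt_eqF.
  have e2 : t * r' = p.2 by rewrite /r' mulrA mulfV ?mul1r // gt_eqF.
  rewrite e1; have := ler_wpM2l (ltW t0) ha; rewrite mulrBr e2; lra.
-
  set s := - t.
  have s0 : 0 < s by rewrite /s oppr_gt0.
  set x' := s^-1 *: p.1; set r' := s^-1 * p.2.
  have Gx' : G (x', r') by exact: (QQ_scale QG sG _ Gp).
  have ha : r' - `|x' - z| <= a.
    by apply: sup_upper_bound => //; exists (x', r').
  have e1 : `|p.1 + t *: z| = s * `|x' - z|.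
    rewrite -[s in RHS]gtr0_norm // -normrZ scalerBr /x' scalerA mulfV ?scale1r; last by rewrite gt_eqF.
    by rewrite /s scaleNr opprK.
  have e2 : s * r' = p.2 by rewrite /r' mulrA mulfV ?mul1r // gt_eqF.
  rewrite e1; have := ler_wpM2l (ltW s0) ha; rewrite mulrBr e2 /s; lra.
Qed.


Lemma ext G z : QQ G -> G0 `<=` G -> ~ (exists r, G (z, r)) ->
  exists G', [/\ QQ G', G `<=` G' & ~ (G' `<=` G)].
Proof.
move=> QG sG nz.
have hb := ext_bound z QG sG; move: hb.
set a := sup _ => hb.
pose G' := [set q | exists p t, G p /\ q = (p.1 + t *: z, p.2 + t * a)].
exists G'; split.
- split.
    move=> b _ _ [p [t [Gp ->]]] [p' [t' [Gp' ->]]] /=.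
    exists (b *: p.1 + p'.1, b * p.2 + p'.2), (b * t + t'); split.
      exact: QG.1.
    congr (_, _) => /=.
      by rewrite scalerDr scalerA scalerDl addrACA.
    by rewrite mulrDr mulrA mulrDl addrACA.
  by move=> _ [p [t [Gp ->]]] /=; exact: hb.
- by move=> [x r] Gp; exists (x, r), 0; rewrite scale0r mul0r !addr0.
- move=> /(_ (z, a)) h; apply: nz; exists a; apply: h.
  exists (0 *: y, 0 * `|y|), 1; split; first by apply: sG; exists 0.
  by rewrite /= scale0r mul0r !add0r scale1r mul1r.
Qed.

Definition PP (A : set (X * R)) := QQ (A `|` G0).

Lemma chain_ok (F : set (set (X * R))) : F `<=` PP -> total_on F subset ->
  PP (\bigcup_(B in F) B).
Proof.
move=> FP tot.
have pick : forall p, (\bigcup_(B in F) B `|` G0) p ->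
    exists B, (F B \/ B = set0) /\ (B `|` G0) p.
  move=> p [[B FB Bp]|G0p]; first by exists B; split; [left|left].
  by exists set0; split; [right|right].
have QB : forall B, F B \/ B = set0 -> QQ (B `|` G0).
  by move=> B [/FP//|->]; rewrite set0U; exact: QQ_G0.
have sub : forall B, F B \/ B = set0 -> B `|` G0 `<=` \bigcup_(B in F) B `|` G0.
  move=> B [FB|->] p; last by rewrite set0U; right.
  by move=> [Bp|G0p]; [left; exists B|right].
split.
  move=> c p q /pick [Bp [hBp pBp]] /pick [Bq [hBq qBq]].
  have [B [hB [pB qB]]] : exists B, (F B \/ B = set0) /\ ((B `|` G0) p /\ (B `|` G0) q).
    case: hBp => [FBp|Bp0]; last first.
      exists Bq; split => //; split => //; move: pBp; rewrite Bp0 set0U => ?; by right.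
    case: hBq => [FBq|Bq0]; last first.
      exists Bp; split; [left|split] => //; move: qBq; rewrite Bq0 set0U => ?; by right.
    case: (tot _ _ FBp FBq) => sB.
      exists Bq; split; [left|split] => //; case: pBp => [/sB ?|?]; [left|right] => //.
    exists Bp; split; [left|split] => //; case: qBq => [/sB ?|?]; [left|right] => //.
  by apply: (sub _ hB); exact: (QB _ hB).1.
by move=> p /pick [B [hB pB]]; exact: (QB _ hB).2.
Qed.

Lemma HBy : exists phi : X -> R,
  [/\ forall (a : R) u v, phi (a *: u + v) = a * phi u + phi v,
      forall x, `|phi x| <= `|x| & phi y = `|y|].
Proof.
have [A [PA maxA]] := Zorn_bigcup chain_ok.
set G := A `|` G0.
have sG : G0 `<=` G by move=> p ?; right.
have tot : forall z, exists r, G (z, r).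
  move=> z; apply: contrapT => nz.
  have [G' [QG' sGG' nG'G]] := ext PA sG nz.
  apply: (maxA G').
    split; first by move=> p Ap; apply: sGG'; left.
    by move=> sG'A; apply: nG'G => p /sG'A ?; left.
  rewrite /PP; suff -> : G' `|` G0 = G' by [].
  by apply/setUidPl => p /sG /sGG'.
have [phi hphi] := choice tot.
exists phi; split.
- move=> a u v; apply: (QQ_fun PA (hphi _)).
  by have := PA.1 a _ _ (hphi u) (hphi v).
- move=> x; rewrite ler_norml; apply/andP; split.
    have := PA.2 _ (QQ_scale PA sG (-1) (hphi x)).
    by rewrite /= scaleN1r normrN; lra.
  exact: (PA.2 _ (hphi x)).
- apply: (QQ_fun PA (hphi _)); apply: sG; exists 1.
  by rewrite scale1r mul1r.
Qed.

End HBsec.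

Section Main.
Context {R : realType} {X : completeNormedModType R}.

Lemma lin_cont (Y : normedModType R) (f : X -> Y) k : is_linear f ->
  (forall x, `|f x| <= k * `|x|) -> continuous f.
Proof.
move=> fl fb x; apply/cvgrPdist_lt => e e0.
have k1 : 0 < `|k| + 1 by rewrite ltr_pwDr // normr_ge0.
near=> v.
have hv : `|x - v| < e / (`|k| + 1).
  by near: v; exact: (@cvgr_dist_lt _ _ _ (nbhs x) _ id x cvg_id _ (divr_gt0 e0 k1)).
have -> : f x - f v = f (x - v).
  by have := fl 1 (x - v) v; rewrite scale1r subrK scale1r => ->; rewrite addrK.
apply: (le_lt_trans (fb _)).
have h1 : k * `|x - v| <= (`|k| + 1) * `|x - v|.
  by apply: ler_wpM2r => //; apply: (le_trans (ler_norm _)); lra.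
apply: (le_lt_trans h1); rewrite mulrC -ltr_pdivlMr //.
Unshelve. all: by end_near. Qed.


Lemma Jfun (w : X) : exists xs : X -> R, [/\ in_dual xs, dual_norm xs ^+ 2 = `|w| ^+ 2,
   xs w = `|w| ^+ 2 & forall v, `|xs v| <= `|w| * `|v|].
Proof.
have [phi [pl pb pw]] := HBy w.
pose xs v := `|w| * phi v.
have xl : is_linear xs.
  move=> a u v; rewrite /xs pl.
  have -> : a *: (`|w| * phi u) = a * (`|w| * phi u) by [].
  by rewrite mulrDr mulrCA.
have xb : forall v, `|xs v| <= `|w| * `|v|.
  by move=> v; rewrite /xs normrM normr_id ler_wpM2l.
have xw : xs w = `|w| ^+ 2 by rewrite /xs pw expr2.
exists xs; split => //.
- split => //; exact: (lin_cont xl xb).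
- congr (_ ^+ 2); rewrite /dual_norm.
  have ne : [set `|xs x| | x in [set x : X | `|x| <= 1]] !=set0.
    by exists `|xs 0|, 0 => //=; rewrite normr0.
  apply/eqP; rewrite eq_le; apply/andP; split.
    apply: ge_sup => // _ [v /= v1 <-].
    apply: (le_trans (xb v)); rewrite -[X in _ <= X]mulr1; exact: ler_wpM2l.
  have hs : has_sup [set `|xs x| | x in [set x : X | `|x| <= 1]].
    split => //; exists `|w| => _ [v /= v1 <-].
    apply: (le_trans (xb v)); rewrite -[X in _ <= X]mulr1; exact: ler_wpM2l.
  have [->|w0] := eqVneq w 0.
    rewrite normr0; apply: (le_trans (normr_ge0 (xs 0))).
    by apply: sup_upper_bound => //; exists 0 => //=; rewrite normr0.
  have nw : 0 < `|w| by rewrite normr_gt0.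
  apply: sup_upper_bound => //; exists (`|w|^-1 *: w).
    by rewrite /= normrZ normrV ?unitfE ?normr_eq0 // normr_id mulVf ?normr_eq0.
  rewrite /xs -[`|w|^-1 *: w]addr0 pl.
  have p0 : phi 0 = 0.
    by have := pl 1 0 0; rewrite scale1r addr0 mul1r => /eqP; rewrite addrC -subr_eq subrr eq_sym => /eqP.
  rewrite p0 addr0 pw mulrA mulfV ?normr_eq0 // mul1r normr_id //.
Qed.


Lemma lin0 (Y : lmodType R) (f : X -> Y) : is_linear f -> f 0 = 0.
Proof.
move=> fl; have := fl 1 0 0; rewrite scale1r addr0 scale1r => h.
by apply: (addrI (f 0)); rewrite addr0 -h.
Qed.

Lemma linZ (Y : lmodType R) (f : X -> Y) a v : is_linear f -> f (a *: v) = a *: f v.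
Proof. by move=> fl; rewrite -[a *: v]addr0 fl lin0 // addr0. Qed.

Lemma linD (Y : lmodType R) (f : X -> Y) u v : is_linear f -> f (u + v) = f u + f v.
Proof. by move=> fl; have := fl 1 u v; rewrite !scale1r. Qed.

Lemma Pbound (P : X -> X) : is_linear P -> (forall x, P (P x) = P x) ->
  numerically_positive P -> forall x, `|P x| <= 4 * `|x|.
Proof.
move=> Pl Pi Pn x.
set z := (- 2^-1) *: P x + x.
have Pz : P z = 2^-1 *: P x.
  have h2 : (2^-1 + 2^-1 : R) = 1 by lra.
  rewrite /z Pl Pi scaleNr.
  by rewrite {2}[P x](_ : _ = 2^-1 *: P x + 2^-1 *: P x) ?addKr // -scalerDl h2 scale1r.
have [xs [xd xn xz xb]] := Jfun z.
have h := Pn z xs xd xn xz; rewrite Pz (linZ _ _ xd.1) in h.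
have hP : 0 <= xs (P x).
  by move: h; have -> : 2^-1 *: xs (P x) = 2^-1 * xs (P x) by []; rewrite pmulr_rge0.
have ex : x = z + 2^-1 *: P x by rewrite /z scaleNr addrAC addNr add0r.
have hx : xs x = `|z| ^+ 2 + 2^-1 * xs (P x).
  by rewrite {1}ex (linD _ _ xd.1) xz (linZ _ _ xd.1).
have hb : xs x <= `|z| * `|x| by apply: (le_trans (ler_norm _)); exact: xb.
have zx : `|z| <= `|x|.
  have z0 := normr_ge0 z; have x0 := normr_ge0 x.
  have h2 : 0 <= 2^-1 * xs (P x) by rewrite mulr_ge0.
  rewrite expr2 in hx; nra.
have e : `|P x| = 2 * `|x - z|.
  rewrite {2}ex addrC addKr normrZ normfV ger0_norm // mulrA mulfV ?mul1r //.
have t := ler_normB x z.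
rewrite e; lra.
Qed.


Lemma ultra_lim (U : set_system X) (g : X -> R) (b : R) : UltraFilter U ->
  U [set v | `|g v| <= b] -> exists l, `|l| <= b /\ g @ U --> l.
Proof.
move=> UU Ub.
have hA' : U (g @^-1` [set` `[-b, b]]).
  apply: filterS Ub => v /= h; rewrite in_itv /= -ler_norml; exact: h.
have hA : (g @ U) [set` `[-b, b]] by exact: hA'.
have [l [Al cl]] := @segment_compact _ (-b) b _ _ hA.
exists l; split.
  by move: Al; rewrite /= in_itv /= -ler_norml.
move=> N Nl /=.
case: (in_ultra_setVsetC (g @^-1` N) UU) => // hc.
have [w [w1 w2]] := cl _ _ (hc : (g @ U) (~` N)) Nl.
by case: w1.
Qed.


Lemma scal_inj (v : X) (a b : R) : v != 0 -> a *: v = b *: v -> a = b.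
Proof.
move=> v0 /eqP; rewrite -subr_eq0 -scalerBl scaler_eq0 (negbTE v0) orbF subr_eq0.
by move/eqP.
Qed.

Lemma flinn0 : flinn (0 : X).
Proof.
exists (fun _ => 0); split.
- by move=> a x y; rewrite scaler0 addr0.
- exact: cst_continuous.
- by [].
- apply/seteqP; split => v.
    by move=> [x _ <-]; exists 0 => //; rewrite scaler0.
  by move=> [c _ <-]; exists 0 => //; rewrite scaler0.
- by move=> x xs [xl _] _ _; rewrite (lin0 xl).
Qed.

End Main.

Unset Implicit Arguments.
Set Strict Implicit.

Theorem proposition2p4 (R : realType) (X : completeNormedModType R) :
  closed (@flinn_set R X).
Proof.
move=> u hu.
have [->|u0] := eqVneq u 0; first exact: flinn0.
set d := `|u|.
have d0 : 0 < d by rewrite normr_gt0.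
have d2 : 0 < d / 2 by rewrite divr_gt0.
set M := 8 / d.
have M0 : 0 < M by rewrite divr_gt0.
have : forall v : X, exists P : X -> X, flinn v ->
   [/\ is_linear P, continuous P, (forall x, P (P x) = P x),
       range P = [set c *: v | c in [set: R]] & numerically_positive P].
  move=> v; case: (pselect (flinn v)) => [[P hP]|nf]; first by exists P.
  by exists id.
move=> /choice [Pf hPf].
have : forall v : X, exists cv : X -> R, forall x, flinn v -> Pf v x = cv x *: v.
  move=> v.
  suff : forall x, exists c0 : R, flinn v -> Pf v x = c0 *: v.
    by move=> /choice [cv hcv]; exists cv.
  move=> x; case: (pselect (flinn v)) => [fv|nf]; last by exists 0.
  have [_ _ _ hr _] := hPf v fv.
  have : range (Pf v) (Pf v x) by exists x.
  by rewrite hr => -[c0 _ e]; exists c0.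
move=> /choice [c hc].
have cprop : forall v, flinn v -> `|u - v| < d / 2 ->
   [/\ forall a x y, c v (a *: x + y) = a * c v x + c v y,
       forall x, `|c v x| <= M * `|x| & c v v = 1].
  move=> v fv dv.
  have [Pl Pc Pi Pr Pn] := hPf v fv.
  have vd : d / 2 < `|v|.
    have := ler_normD (u - v) v; rewrite subrK -/d => h.
    have : d = d / 2 + d / 2 by rewrite -splitr.
    lra.
  have v0 : v != 0 by rewrite -normr_gt0; apply: lt_trans vd.
  split.
  - move=> a x y; apply: (scal_inj v0).
    rewrite -hc // Pl !hc // scalerDl scalerA //.
  - move=> x.
    have hb := Pbound Pl Pi Pn x; rewrite hc // normrZ in hb.
    rewrite /M mulrAC ler_pdivlMr //.
    have := normr_ge0 (c v x); have := normr_ge0 x.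
    nra.
  - have : range (Pf v) v by rewrite Pr; exists 1 => //; rewrite scale1r.
    move=> [w _ ew].
    have e2 : Pf v v = v by have := Pi w; rewrite ew.
    apply: (scal_inj v0); rewrite scale1r -hc //.
pose B r := [set v : X | `|u - v| < r /\ flinn v].
pose F := filter_from [set r : R | 0 < r] B.
have FF : Filter F.
  apply: filter_from_filter; first by exists 1; rewrite /= ltr01.
  move=> i j i0 j0; exists (Num.min i j); first by rewrite /= lt_min i0 j0.
  by move=> v [h fv]; move: h; rewrite lt_min => /andP[h1 h2]; split; split.
have FP : ProperFilter F.
  apply: filter_from_proper => // r r0.
  have nb : nbhs u (ball u r) by apply: nbhsx_ballx.
  have [v [fv bv]] := hu _ nb.
  by exists v; split => //; move: bv; rewrite -ball_normE.
have [U [UU FU]] := ultraFilterLemma FP.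
have PU : ProperFilter U by exact: ultra_proper.
have UB : forall r, 0 < r -> U (B r) by move=> r r0; apply: FU; exists r.
have : forall x, exists l, `|l| <= M * `|x| /\ (fun v => c v x) @ U --> l.
  move=> x; apply: (ultra_lim UU).
  apply: filterS (UB _ d2) => v [h1 h2]; have [_ hb _] := cprop v h2 h1; exact: hb x.
move=> /choice [C hC].
have lim_eq : forall (g1 g2 : X -> R) (l : R),
    (forall v, flinn v -> `|u - v| < d / 2 -> g1 v = g2 v) -> g2 @ U --> l -> g1 @ U --> l.
  move=> g1 g2 l e h; apply: cvg_trans h; apply: near_eq_cvg.
  by apply: filterS (UB _ d2) => v [h1 h2]; rewrite e.
have uniq : forall (g : X -> R) (a b : R), g @ U --> a -> g @ U --> b -> a = b.
  by move=> g a b ha hb; exact: (norm_cvg_unique ha hb).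
have Clin : forall a x y, C (a *: x + y) = a * C x + C y.
  move=> a x y; apply: (uniq _ _ _ (hC (a *: x + y)).2).
  apply: (lim_eq _ ((fun _ => a) \* (fun v => c v x) + (fun v => c v y))).
    by move=> v fv dv; have [l _ _] := cprop v fv dv; rewrite l.
  apply: cvgD; last exact: (hC y).2.
  exact: cvgM (cvg_cst a) (hC x).2.
have C0 : C 0 = 0.
  have := Clin 1 0 0; rewrite scale1r addr0 mul1r => h.
  by apply: (addrI (C 0)); rewrite addr0 -h.
have CZ : forall a x, C (a *: x) = a * C x.
  by move=> a x; rewrite -[a *: x]addr0 Clin C0 addr0.
have Cb : forall x, `|C x| <= M * `|x| by move=> x; exact: (hC x).1.
have hUu : (fun v : X => v) @ U --> u.
  move=> N /nbhs_ballP [r r0 sub]; apply: FU; exists r => // v [h1 _].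
  by apply: sub; rewrite -ball_normE.
have Cu : C u = 1.
  apply: (uniq _ _ _ (hC u).2); apply/cvgrPdist_lt => e e0.
  have r0 : 0 < Num.min (d / 2) (e / M) by rewrite lt_min d2 divr_gt0.
  apply: filterS (UB _ r0) => v [h1 fv]; move: h1; rewrite lt_min => /andP[h1 h2].
  have [cl cb cv] := cprop v fv h1.
  have -> : c v u = c v (u - v) + 1.
    by rewrite -cv; have := cl 1 (u - v) v; rewrite scale1r subrK mul1r.
  rewrite opprD addrCA subrr addr0 normrN.
  apply: (le_lt_trans (cb _)).
  by rewrite mulrC -ltr_pdivlMr.
pose P := fun x => C x *: u.
exists P; split.
- by move=> a x y; rewrite /P Clin scalerDl scalerA.
- apply: (@lin_cont R X _ P (M * `|u|)).
    by move=> a x y; rewrite /P Clin scalerDl scalerA.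
  move=> x; rewrite /P normrZ mulrAC; apply: ler_wpM2r => //.
- by move=> x; rewrite /P CZ Cu mulr1.
- apply/seteqP; split => w.
    by move=> [x _ <-]; exists (C x).
  by move=> [a _ <-]; exists (a *: u) => //; rewrite /P CZ Cu mulr1.
- move=> x xs xd xn xx; rewrite /P (linZ _ _ xd.1).
  have -> : C x *: xs u = C x * xs u by [].
  have hxs : xs @ U --> xs u.
    by apply: cvg_trans (xd.2 u); exact: (cvg_app xs hUu).
  have lim1 : ((fun v => c v x) \* xs) @ U --> C x * xs u.
    by apply: cvgM; [exact: (hC x).2 | exact: hxs].
  have hn : U [set v | [set r : R | 0 <= r] (((fun v => c v x) \* xs) v)].
    apply: filterS (UB _ d2) => v [h1 fv] /=.
    have [_ _ _ _ Pn] := hPf v fv.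
    have := Pn x xs xd xn xx; rewrite hc // (linZ _ _ xd.1).
    by [].
  exact: (closed_cvg _ (@closed_ge _ 0) hn _ lim1).
Qed.
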